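(* Each of the varieties $\mathsf{PSB}$, $\mathsf{PsC}$, $\mathsf{SIA}$ and $\mathsf{S^2IA}$ is closed under canonical extensions: if a conditional algebra $\langle A,\to\rangle$ belongs to one of them, then $\langle\mathcal{P}(\mathrm{Ul}(A)),\to_{T_A}\rangle$ belongs to the same variety.
   Context: A conditional algebra is $\langle A,\to\rangle$ with $A$ a Boolean algebra and $\to$ binary satisfying (C1) $a\to1=1$, (C2) $(a\to b)\wedge(a\to c)=a\to(b\wedge c)$, (C3) $(a\vee b)\to c\le(a\to c)\wedge(b\to c)$. Further equations: (C1* ) $0\to a=1$; (C3* ) $(a\to c)\wedge(b\to c)\le(a\vee b)\to c$; (C4) $a\to b\le c\to(a\to b)$; (C5) $a\wedge(a\to b)\le b$; (C6) $a\to b\le\neg b\to\neg a$; (C7) $\neg(a\to b)\le c\to\neg(a\to b)$; (C8) $(1\to(\neg a\vee b))\wedge(b\to c)\le a\to c$. $\mathsf{PSB}$ = conditional algebras satisfying C1*, C3*; $\mathsf{PsC}$ = $\mathsf{PSB}$ + C5, C6; $\mathsf{SIA}$ = $\mathsf{PSB}$ + C4, C5, C7, C8; $\mathsf{S^2IA}$ = $\mathsf{PSB}$ + C4, C5, C6, C7. Filters include the improper filter $A$; $\varphi(F)=\{u\in\mathrm{Ul}(A):F\subseteq u\}$; $D^{\to}_u(F)=\{b:\exists a\in F,\ a\to b\in u\}$; $T_A(u,Z,v)$ iff there is a filter $F$ with $Z=\varphi(F)$ and $D^{\to}_u(F)\subseteq v$; $T_A(u,Z)=\{v:T_A(u,Z,v)\}$;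 $U\to_{T_A}V=\{u:\forall Z\subseteq U,\ T_A(u,Z)\subseteq V\}$. *)

(* Defs.v *)
(* Boolean algebras are complemented distributive lattices
   with top and bottom (ctbDistrLatticeType); the powerset P(X) is the
   classical `set X`, which mathcomp-classical equips with that structure. *)
From HB Require Import structures.
From mathcomp Require Import all_boot all_order.
From mathcomp Require Import boolp classical_sets.
Import Order.TTheory.

Set Implicit Arguments.
Unset Strict Implicit.
Unset Printing Implicit Defensive.

Local Open Scope order_scope.

Section CondAlg.
Context {d : Order.disp_t} {T : ctbDistrLatticeType d}.
Variable imp : T -> T -> T.

Local Notation "a ~> b" := (imp a b) (at level 55, right associativity).
Local Notation neg := (@Order.compl d T).

Definition C1 : Prop := forall a, a ~> \top = \top.
Definition C2 : Prop := forall a b c, (a ~> b) `&` (a ~> c) = a ~> (b `&` c).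
Definition C3 : Prop := forall a b c, (a `|` b) ~> c <= (a ~> c) `&` (b ~> c).
Definition conditional_algebra : Prop := C1 /\ C2 /\ C3.

Definition C1s : Prop := forall a, \bot ~> a = \top.
Definition C3s : Prop := forall a b c, (a ~> c) `&` (b ~> c) <= (a `|` b) ~> c.
Definition C4 : Prop := forall a b c, a ~> b <= c ~> (a ~> b).
Definition C5 : Prop := forall a b, a `&` (a ~> b) <= b.
Definition C6 : Prop := forall a b, a ~> b <= neg b ~> neg a.
Definition C7 : Prop := forall a b c, neg (a ~> b) <= c ~> neg (a ~> b).
Definition C8 : Prop :=
  forall a b c, (\top ~> (neg a `|` b)) `&` (b ~> c) <= a ~> c.

Definition PSB : Prop := conditional_algebra /\ C1s /\ C3s.
Definition PsC : Prop := PSB /\ C5 /\ C6.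
Definition SIA : Prop := PSB /\ C4 /\ C5 /\ C7 /\ C8.
Definition S2IA : Prop := PSB /\ C4 /\ C5 /\ C6 /\ C7.

End CondAlg.

Section CanonicalExtension.
Context {d : Order.disp_t} {T : ctbDistrLatticeType d}.

(* filters (the improper filter T itself is a filter) *)
Definition is_filter (F : set T) : Prop :=
  [/\ F \top,
      (forall a b, F a -> a <= b -> F b) &
      (forall a b, F a -> F b -> F (a `&` b))].

Definition is_proper_filter (F : set T) : Prop := is_filter F /\ ~ F \bot.

Definition is_ultrafilter (u : set T) : Prop :=
  is_proper_filter u /\
  (forall G : set T, is_proper_filter G -> (u `<=` G)%classic -> G = u).

Definition Ul : Type := {u : set T | is_ultrafilter u}.

Definition phi (F : set T) : set Ul := [set u : Ul | (F `<=` sval u)%classic].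

Variable imp : T -> T -> T.

Definition Dimp (u : Ul) (F : set T) : set T :=
  [set b | exists a, F a /\ sval u (imp a b)].

Definition TA3 (u : Ul) (Z : set Ul) (v : Ul) : Prop :=
  exists F : set T, is_filter F /\ Z = phi F /\ (Dimp u F `<=` sval v)%classic.

Definition TA (u : Ul) (Z : set Ul) : set Ul := [set v | TA3 u Z v].

Definition impT (U V : set Ul) : set Ul :=
  [set u | forall Z : set Ul, (Z `<=` U)%classic -> (TA u Z `<=` V)%classic].

End CanonicalExtension.

(* Main.v *)
Require Import Defs.
From HB Require Import structures.
From mathcomp Require Import all_boot all_order.
From mathcomp Require Import boolp classical_sets.
Import Order.Theory.

Set Implicit Arguments.
Unset Strict Implicit.
Unset Printing Implicit Defensive.

Section Aux.
Context {d : Order.disp_t} {T : ctbDistrLatticeType d}.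
Local Open Scope order_scope.
Local Notation UlT := (@Ul d T).

Lemma filter_top (F : set T) : is_filter F -> F \top.
Proof. by case. Qed.
Lemma filter_up (F : set T) a b : is_filter F -> F a -> a <= b -> F b.
Proof. by case=> _ h _; apply: h. Qed.
Lemma filter_meet (F : set T) a b : is_filter F -> F a -> F b -> F (a `&` b).
Proof. by case=> _ _ h; apply: h. Qed.

Lemma uf_filter (u : UlT) : is_filter (sval u).
Proof. by case: u => ? [[]]. Qed.
Lemma uf_pfilter (u : UlT) : is_proper_filter (sval u).
Proof. by case: u => ? []. Qed.
Lemma uf_proper (u : UlT) : ~ sval u \bot.
Proof. by case: u => ? [[]]. Qed.
Lemma uf_max (u : UlT) G : is_proper_filter G -> (sval u `<=` G)%classic -> G = sval u.
Proof. move=> pG; case: u => x [_ h] /=; exact: h. Qed.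
Lemma uf_top (u : UlT) : sval u \top.
Proof. exact: filter_top (uf_filter u). Qed.
Lemma uf_up (u : UlT) a b : sval u a -> a <= b -> sval u b.
Proof. exact: filter_up (uf_filter u). Qed.
Lemma uf_meet (u : UlT) a b : sval u a -> sval u b -> sval u (a `&` b).
Proof. exact: filter_meet (uf_filter u). Qed.

Lemma uf_compl (u : UlT) a : sval u a \/ sval u (~` a).
Proof.
have [h|h] := pselect (sval u a); [by left| right].
pose G := [set x : T | exists y, sval u y /\ (y `&` a <= x)%O]%classic.
have fG : is_filter G.
  split.
  - by exists \top; split; [exact: uf_top | exact: lex1].
  - move=> x z [y [uy le]] xz; exists y; split=> //; exact: le_trans xz.
  - move=> x z [y1 [u1 l1]] [y2 [u2 l2]]; exists (y1 `&` y2); split; first exact: uf_meet.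
    rewrite lexI; apply/andP; split.
    + by apply: le_trans l1; rewrite leI2 // leIl.
    + by apply: le_trans l2; rewrite leI2 // leIr.
have uG : (sval u `<=` G)%classic by move=> y uy; exists y; split => //; exact: leIl.
have [Gb|Gnb] := pselect (G \bot).
- case: Gb => y [uy le]; apply: uf_up uy _.
  by rewrite -disj_leC -lex0.
- exfalso; apply: h; have := uf_max (conj fG Gnb) uG => eq.
  rewrite -eq; exists \top; split; [exact: uf_top| exact: leIr].
Qed.

Lemma uf_nboth (u : UlT) a : sval u a -> sval u (~` a) -> False.
Proof. by move=> h1 h2; have := uf_meet h1 h2; rewrite meetxC; exact: uf_proper. Qed.

Lemma uf_join (u : UlT) a b : sval u (a `|` b) -> sval u a \/ sval u b.
Proof.
move=> h; case: (uf_compl u a) => [|na]; [by left|].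
case: (uf_compl u b) => [|nb]; [by right|].
by exfalso; apply: (uf_nboth h); rewrite complU; exact: uf_meet.
Qed.

Lemma uf_not (u : UlT) a : ~ sval u a -> sval u (~` a).
Proof. by case: (uf_compl u a). Qed.

Lemma Ul_inj (u v : UlT) : sval u = sval v -> u = v.
Proof.
case: u => x px; case: v => y py /= exy; subst y; congr exist.
exact: Prop_irrelevance.
Qed.

Lemma phi_uf (w : UlT) : phi (sval w) = [set w]%classic.
Proof.
apply/seteqP; split => [v /= wv | v /= ->]; last by [].
by apply: Ul_inj; apply: (@uf_max w (sval v)) => //; exact: uf_pfilter.
Qed.

Lemma ul_ext (F : set T) : is_proper_filter F -> exists w : UlT, (F `<=` sval w)%classic.
Proof.
move=> [fF nb].
pose P := [set X : set T | (is_proper_filter X /\ (F `<=` X)%classic) \/ X = set0]%classic.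
have hP : forall C, (C `<=` P)%classic -> total_on C subset -> P (\bigcup_(X in C) X)%classic.
  move=> C CP tot.
  have hC : forall X a, C X -> X a -> is_proper_filter X.
    by move=> X a CX Xa; case: (CP X CX) => [[]|eX] //; move: Xa; rewrite eX.
  have [[X0 [CX0 [pX0 FX0]]]|nex] := pselect (exists X, C X /\ is_proper_filter X /\ (F `<=` X)%classic).
  - left; split; last by move=> x Fx; exists X0 => //; exact: FX0.
    split; last by move=> [X CX Xb]; case: (hC X _ CX Xb) => _; apply.
    split.
    + by exists X0 => //; exact: filter_top (proj1 pX0).
    + move=> a b [X CX Xa] ab; exists X => //; apply: filter_up ab => //.
      exact: (proj1 (hC X a CX Xa)).
    + move=> a b [X CX Xa] [Y CY Yb].
      case: (tot X Y CX CY) => XY.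
      * exists Y => //; apply: (filter_meet (proj1 (hC Y b CY Yb)) (XY _ Xa) Yb).
      * exists X => //; apply: (filter_meet (proj1 (hC X a CX Xa)) Xa (XY _ Yb)).
  - right; apply/seteqP; split => x // [X CX Xx].
    case: (CP X CX) => [hX|eX]; first by exfalso; apply: nex; exists X.
    by move: Xx; rewrite eX.
have [A [PA maxA]] := Zorn_bigcup hP.
case: PA => [[pA FA]|eA].
- have uA : is_ultrafilter A.
    split => // G pG AG; apply/seteqP; split => //.
    have [//|nGA] := pselect ((G `<=` A)%classic).
    by exfalso; apply: (maxA G); [split | left; split => //; exact: subset_trans AG].
  by exists (exist _ A uA).
- exfalso; apply: (maxA F); last by left; split.
  rewrite eA; split => //; move=> h; exact: (h _ (filter_top fF)).
Qed.

Definition fjoin (F G : set T) : set T :=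
  [set x | exists f g, [/\ F f, G g & (f `&` g <= x)%O]]%classic.

Lemma fjoin_filter F G : is_filter F -> is_filter G -> is_filter (fjoin F G).
Proof.
move=> fF fG; split.
- by exists \top, \top; split; [exact: filter_top|exact: filter_top|exact: lex1].
- move=> a b [f [g [Ff Gg le]]] ab; exists f, g; split => //; exact: le_trans ab.
- move=> a b [f1 [g1 [Ff1 Gg1 l1]]] [f2 [g2 [Ff2 Gg2 l2]]].
  exists (f1 `&` f2), (g1 `&` g2); split; [exact: filter_meet|exact: filter_meet|].
  rewrite lexI; apply/andP; split.
  + by apply: le_trans l1; rewrite leI2 // leIl.
  + by apply: le_trans l2; rewrite leI2 // leIr.
Qed.

Lemma fjoin_l F G : is_filter G -> (F `<=` fjoin F G)%classic.
Proof. by move=> fG f Ff; exists f, \top; split => //; [exact: filter_top| rewrite meetx1]. Qed.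
Lemma fjoin_r F G : is_filter F -> (G `<=` fjoin F G)%classic.
Proof. by move=> fF g Gg; exists \top, g; split => //; [exact: filter_top| rewrite meet1x]. Qed.

Lemma ul_ext2 (F G : set T) : is_filter F -> is_filter G ->
  (forall f g, F f -> G g -> f `&` g <= \bot -> False) ->
  exists w : UlT, (F `<=` sval w)%classic /\ (G `<=` sval w)%classic.
Proof.
move=> fF fG dis.
have [w hw] : exists w : UlT, (fjoin F G `<=` sval w)%classic.
  apply: ul_ext; split; first exact: fjoin_filter.
  by move=> [f [g [Ff Gg le]]]; exact: (dis f g).
exists w; split; apply: subset_trans hw; [exact: fjoin_l | exact: fjoin_r].
Qed.

End Aux.
Section Main.
Context {d : Order.disp_t} {T : ctbDistrLatticeType d}.
Local Open Scope order_scope.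
Local Notation UlT := (@Ul d T).
Variable imp : T -> T -> T.
Local Notation IT := (@impT d T imp).

Lemma imp_mono (h2 : C2 imp) a b c : b <= c -> imp a b <= imp a c.
Proof.
move=> bc; have -> : imp a b = imp a (b `&` c) by rewrite meet_l.
by rewrite -h2 leIr.
Qed.

Lemma imp_anti (h3 : C3 imp) a a' c : a <= a' -> imp a' c <= imp a c.
Proof.
move=> aa; have -> : imp a' c = imp (a `|` a') c by rewrite join_r.
by apply: le_trans (h3 _ _ _) _; exact: leIl.
Qed.

Lemma TA_single (u w v : UlT) :
  (Dimp imp u (sval w) `<=` sval v)%classic -> TA imp u [set w]%classic v.
Proof.
move=> h; exists (sval w); split; first exact: uf_filter.
by split => //; rewrite phi_uf.
Qed.

Lemma Dimp_filter (h1 : C1 imp) (h2 : C2 imp) (h3 : C3 imp) (u : UlT) F :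
  is_filter F -> is_filter (Dimp imp u F).
Proof.
move=> fF; split.
- by exists \top; split; [exact: filter_top | rewrite h1; exact: uf_top].
- move=> a b [x [Fx ux]] ab; exists x; split => //.
  by apply: uf_up ux _; exact: imp_mono.
- move=> a b [x [Fx ux]] [y [Fy uy]]; exists (x `&` y); split.
  + exact: filter_meet.
  + rewrite -h2; apply: uf_meet.
    * by apply: uf_up ux _; apply: imp_anti => //; exact: leIl.
    * by apply: uf_up uy _; apply: imp_anti => //; exact: leIr.
Qed.

Lemma pres_C1 : C1 IT.
Proof. by move=> U; rewrite topEset; apply/seteqP; split => // u _ Z _ v _. Qed.

Lemma pres_C2 : C2 IT.
Proof.
move=> U V W; rewrite meetEset; apply/seteqP; split.
- move=> u [h1 h2] Z ZU v tv; split; [exact: h1 ZU v tv | exact: h2 ZU v tv].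
- by move=> u h; split => Z ZU v tv; have [] := h Z ZU v tv.
Qed.

Lemma pres_C3 : C3 IT.
Proof.
move=> U V W; apply/subsetPset; rewrite joinEset meetEset.
move=> u h; split => Z ZU; apply: h => x /ZU; by [left|right].
Qed.

Lemma pres_C1s (h1s : C1s imp) : C1s IT.
Proof.
move=> V; rewrite botEset topEset; apply/seteqP; split => // u _ Z Z0 v [F [fF [eZ DF]]].
exfalso.
have Fb : F \bot.
  apply: contrapT => nb; have [w Fw] := ul_ext (conj fF nb).
  have : Z w by rewrite eZ.
  by move/Z0.
have nbv := @uf_proper _ _ v; apply: nbv; apply: DF; exists \bot; split => //.
by rewrite h1s; exact: uf_top.
Qed.


Lemma pres_C3s (h1 : C1 imp) (h2 : C2 imp) (h3 : C3 imp) (h1s : C1s imp) (h3s : C3s imp) :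
  C3s IT.
Proof.
move=> U V W; apply/subsetPset; rewrite joinEset meetEset.
move=> u [hU hV] Z ZUV v [F [fF [eZ DF]]].
apply: contrapT => nW.
pose G := [set x : T | exists a b, [/\ ~ sval v b, sval u (imp a b) & (~` a <= x)%O]]%classic.
have fG : is_filter G.
  split.
  - exists \bot, \bot; split; [exact: (@uf_proper _ _ v) | rewrite h1s; exact: uf_top | exact: lex1].
  - move=> x y [a [b [nb uab le]]] xy; exists a, b; split => //; exact: le_trans xy.
  - move=> x y [a1 [b1 [nb1 u1 l1]]] [a2 [b2 [nb2 u2 l2]]].
    exists (a1 `|` a2), (b1 `|` b2); split.
    + by move=> /uf_join [].
    + apply: uf_up (h3s _ _ _); apply: uf_meet.
      * by apply: uf_up u1 _; apply: imp_mono => //; exact: leUl.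
      * by apply: uf_up u2 _; apply: imp_mono => //; exact: leUr.
    + by rewrite complU leI2.
have dis : forall f g, F f -> G g -> (f `&` g <= \bot)%O -> False.
  move=> f g Ff [a [b [nb uab le]]] fg; apply: nb; apply: DF; exists a; split => //.
  apply: filter_up fF Ff _.
  have : (f `&` ~` a <= \bot)%O by apply: le_trans fg; rewrite leI2.
  by rewrite lex0 disj_leC complK.
have [w [Fw Gw]] := ul_ext2 fF fG dis.
have key : forall X : set UlT, X w ->
    (forall Z0, (Z0 `<=` X)%classic -> (TA imp u Z0 `<=` W)%classic) -> False.
  move=> X Xw hX; apply: nW; apply: (hX [set w]%classic); first by move=> x ->.
  apply: TA_single => b [a [wa uab]]; apply: contrapT => nb.
  apply: (@uf_nboth _ _ w a) => //; apply: Gw; exists a, b; split => //.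
have Zw : Z w by rewrite eZ.
by case: (ZUV w Zw) => [Uw|Vw]; [exact: (key U) | exact: (key V)].
Qed.

Lemma pres_C5 (h5 : C5 imp) : C5 IT.
Proof.
move=> U V; apply/subsetPset; rewrite meetEset.
move=> u [Uu h]; apply: (h [set u]%classic); first by move=> x ->.
apply: TA_single => b [a [ua uab]]; apply: uf_up (h5 a b); exact: uf_meet.
Qed.

Lemma pres_C4 (h4 : C4 imp) : C4 IT.
Proof.
move=> U V W; apply/subsetPset.
move=> u h Z ZW v [F [fF [eZ DF]]] Z' Z'U v' [F' [fF' [eZ' DF']]].
apply: (h Z' Z'U v'); exists F'; split => //; split => //.
move=> b [a [F'a uab]]; apply: DF'; exists a; split => //.
apply: DF; exists \top; split; first exact: filter_top.
by apply: uf_up uab _; exact: h4.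
Qed.

Lemma pres_C7 (h7 : C7 imp) : C7 IT.
Proof.
move=> U V W; apply/subsetPset; rewrite complEset.
move=> u nh Z ZW v [F [fF [eZ DF]]] hv.
apply: nh => Z' Z'U v' [F' [fF' [eZ' DF']]].
apply: (hv Z' Z'U v'); exists F'; split => //; split => //.
move=> b [a [F'a vab]]; apply: contrapT => nb.
have nu : ~ sval u (imp a b) by move=> uab; apply: nb; apply: DF'; exists a.
have := uf_not nu => unab.
apply: (@uf_nboth _ _ v (imp a b)) => //; apply: DF; exists \top; split.
- exact: filter_top.
- by apply: uf_up unab _; exact: h7.
Qed.

Lemma pres_C6 (h1 : C1 imp) (h2 : C2 imp) (h3 : C3 imp) (h6 : C6 imp) : C6 IT.
Proof.
move=> U V; apply/subsetPset; rewrite !complEset.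
move=> u h Z ZnV v [F [fF [eZ DF]]] Uv.
have fG := Dimp_filter h1 h2 h3 u (uf_filter v).
have dis : forall f g, F f -> Dimp imp u (sval v) g -> (f `&` g <= \bot)%O -> False.
  move=> f g Ff [a [va uag]] fg.
  have gf : (g <= ~` f)%O by rewrite -disj_leC -lex0 meetC.
  have : sval u (imp f (~` a)).
    have := h6 a (~` f); rewrite complK => le6; apply: uf_up le6.
    by apply: uf_up uag _; exact: imp_mono.
  move=> ufa; apply: (@uf_nboth _ _ v a) => //; apply: DF; exists f; split => //.
have [w [Fw Gw]] := ul_ext2 fF fG dis.
have Zw : Z w by rewrite eZ.
apply: (ZnV w Zw); apply: (h [set v]%classic); first by move=> x ->.
exact: TA_single.
Qed.

Lemma pres_C8 (h1 : C1 imp) (h2 : C2 imp) (h3 : C3 imp) (h8 : C8 imp) : C8 IT.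
Proof.
move=> U V W; apply/subsetPset; rewrite topEset meetEset joinEset complEset.
move=> u [hT hV] Z ZU v [F [fF [eZ DF]]].
have fT : is_filter [set (\top : T)]%classic.
  split => //.
  - by move=> a b -> ; rewrite le1x => /eqP.
  - by move=> a b -> ->; rewrite meetxx.
have phiT : [set: UlT]%classic = phi [set (\top : T)]%classic.
  by apply/seteqP; split => // x _ y ->; exact: uf_top.
pose H := Dimp imp u [set (\top : T)]%classic.
have fH : is_filter H := Dimp_filter h1 h2 h3 u fT.
pose G := fjoin F H.
have fG : is_filter G := fjoin_filter fF fH.
apply: (hV (phi G)).
- move=> w /= Gw.
  have Uw : U w by apply: ZU; rewrite eZ; apply: subset_trans Gw; exact: fjoin_l.
  have : (~` U `|` V)%classic w.
    apply: (hT [set: UlT]%classic) => //; exists [set (\top : T)]%classic; split => //; split => //.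
    by apply: subset_trans Gw; exact: fjoin_r.
  by case.
- exists G; split => //; split => //.
  move=> c [g [Gg ugc]]; case: Gg => f [k [Ff [a [-> uk]] le]].
  apply: DF; exists f; split => //.
  apply: uf_up (h8 f (f `&` k) c); apply: uf_meet.
  + apply: uf_up uk _; apply: imp_mono => //.
    by rewrite joinIr joinCx meet1x leUr.
  + by apply: uf_up ugc _; exact: imp_anti.
Qed.

End Main.

Theorem corollary9p10 (d : Order.disp_t) (A : ctbDistrLatticeType d)
    (imp : A -> A -> A) :
  (PSB imp -> PSB (@impT d A imp)) /\
  (PsC imp -> PsC (@impT d A imp)) /\
  (SIA imp -> SIA (@impT d A imp)) /\
  (S2IA imp -> S2IA (@impT d A imp)).
Proof.
have hPSB : PSB imp -> PSB (@impT d A imp).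
  move=> [[h1 [h2 h3]] [h1s h3s]].
  split; first split; [exact: pres_C1 | split; [exact: pres_C2 | exact: pres_C3]|].
  by split; [exact: pres_C1s | exact: pres_C3s].
split; first exact: hPSB.
split.
  move=> [hp [h5 h6]]; split; first exact: hPSB.
  case: hp => [[h1 [h2 h3]] _].
  by split; [exact: pres_C5 | exact: pres_C6].
split.
  move=> [hp [h4 [h5 [h7 h8]]]]; split; first exact: hPSB.
  case: hp => [[h1 [h2 h3]] _].
  by split; [exact: pres_C4 | split; [exact: pres_C5 | split; [exact: pres_C7 | exact: pres_C8]]].
move=> [hp [h4 [h5 [h6 h7]]]]; split; first exact: hPSB.
case: hp => [[h1 [h2 h3]] _].
by split; [exact: pres_C4 | split; [exact: pres_C5 | split; [exact: pres_C6 | exact: pres_C7]]].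
Qed.
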